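(* Let $R$ be a semistandard cylindric tableau and $S$ a set of boxes satisfying the input conditions of full multi-insertion, and perform $\operatorname{FullMulti}(R,S)$. Then for every row $r$, the list of entries removed from row $r$ (either removed from boxes of $S$ in the initial phase, or displaced by a bump), in the order in which they were removed, is weakly increasing.
   Context: Fix integers $n>k\ge1$. A cylindric partition is a weakly decreasing integer sequence $(\lambda_m)_{m\in\mathbb Z}$ with $\lambda_m=\lambda_{m+k}+n-k$. A point $(x,y)\in\mathbb Z^2$ lies in $\lambda$ if $y\le\lambda_x$. Boxes are classes of points modulo translation by multiples of $(-k,n-k)$; row $x$ of the cylinder is the image of plane row $x$ (indexed mod $k$), column $y$ the image of plane column $y$; within a row boxes are ordered left to right by $y$-coordinates of representatives in a fixed plane row. $\mu\subseteq\lambda$ means $\mu_m\le\lambda_m$ for all $m$. A (semistandard cylindric) tableau of shape $\lambda/\mu$ is a map from the boxes in $\lambda$ but not $\mu$ to a totally ordered alphabet, weakly increasing along plane rows and strictly increasing down plane columns; its shapes are part of its data. Full multi-insertion $\operatorname{FullMulti}(R,S)$: input a tableau $R$ with outer shape $\lambda$, inner shape $\mu$, and a set $S$ of boxes not in $\mu$, no two in the same column, such that $\mu$ plus $S$ is a cylindric partition. Choose an integer $r_0$. For $h=r_0,\dots,r_0+k-1$, go through the boxes of $S$ in row $h$ from left to right: if the box is in $\lambda$, remove its entry $x$ and append $(x,h+1)$ to a queue; otherwise add the box to $\lambda$. All boxes of $S$ are added to the inner shape. Then, while the current queue $q$ is nonempty: start an empty queue $q'$; remove pairs $(x,s)$ from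 the front of $q$ one at a time; if $x$ is $\ge$ every entry in row $s$, put $x$ into the leftmost box of row $s$ not in the current outer shape and add it to the outer shape; otherwise replace the leftmost entry $x'$ of row $s$ greater than $x$ by $x$ (a bump displacing $x'$) and append $(x',s+1)$ to $q'$; when $q$ is exhausted set $q:=q'$. All actions are performed one at a time, giving a time order. *)

(* Defs.v *)
From HB Require Import structures.
From mathcomp Require Import all_boot all_order all_algebra.
Set Implicit Arguments. Unset Strict Implicit. Unset Printing Implicit Defensive.
Import Order.TTheory GRing.Theory Num.Theory.
Local Open Scope ring_scope.

Section Cylindric.
Variables (n k : nat).

Definition cylindric (lam : int -> int) : Prop :=
  (forall m : int, lam (m + 1) <= lam m) /\
  (forall m : int, lam m = lam (m + k%:Z) + (n%:Z - k%:Z)).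

Definition in_shape (lam : int -> int) (x y : int) : bool := y <= lam x.

Definition in_skew (lam mu : int -> int) (x y : int) : bool :=
  in_shape lam x y && ~~ in_shape mu x y.

Definition contained (mu lam : int -> int) : Prop := forall m : int, mu m <= lam m.

(* (x1,y1) and (x2,y2) represent the same box: they differ by a multiple
   of (-k, n-k). *)
Definition same_box (x1 y1 x2 y2 : int) : bool :=
  (k%:Z %| (x2 - x1))%Z &&
  (y1 - y2 == ((x2 - x1) %/ k%:Z)%Z * (n%:Z - k%:Z)).

(* points in plane row x equal to row x' of the cylinder *)
Definition same_row (x x' : int) : bool := (k%:Z %| (x - x'))%Z.

Variables (d : Order.disp_t) (T : orderType d).

(* A semistandard cylindric tableau of shape lam/mu, with entries given on
   plane points (ent x y = entry of the box of (x,y)); values outside the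
   skew shape are irrelevant. *)
Definition is_tableau (lam mu : int -> int) (ent : int -> int -> T) : Prop :=
  [/\ cylindric lam /\ cylindric mu, contained mu lam,
      (forall x y : int, in_skew lam mu x y ->
          ent x y = ent (x - k%:Z) (y + (n%:Z - k%:Z))),
      (forall x y : int, in_skew lam mu x y -> in_skew lam mu x (y + 1) ->
          (ent x y <= ent x (y + 1))%O) &
      (forall x y : int, in_skew lam mu x y -> in_skew lam mu (x + 1) y ->
          (ent x y < ent (x + 1) y)%O)].

(* State of the algorithm: outer shape, inner shape, entries, current queue q,
   next queue q', and the log of removals (row, removed entry) in time order. *)
Record state := State {
  st_lam : int -> int;
  st_mu : int -> int;
  st_ent : int -> int -> T;
  st_q : seq (T * int);
  st_q' : seq (T * int);
  st_log : seq (int * T) }.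

Definition row_ys (lam mu : int -> int) (s : int) : seq int :=
  if mu s <= lam s then [seq mu s + (j.+1)%:Z | j <- iota 0 `|lam s - mu s|%N]
  else [::].

(* Initial phase: S = nu/mu.  For h = r0, ..., r0+k-1 and the boxes of S in
   row h from left to right, those lying in lam have their entry removed
   (list of (entry, h)); the others are added to lam. *)
Definition phase1_removed (lam mu nu : int -> int) (ent : int -> int -> T)
    (r0 : int) : seq (T * int) :=
  flatten [seq [seq (ent h y, h) | y <- row_ys nu mu h & y <= lam h]
          | h <- [seq r0 + i%:Z | i <- iota 0 k]].

Definition init_state (lam mu nu : int -> int) (ent : int -> int -> T)
    (r0 : int) : state :=
  let rm := phase1_removed lam mu nu ent r0 in
  State (fun m => Num.max (lam m) (nu m)) nu ent
        [seq (p.1, p.2 + 1) | p <- rm] [::] [seq (p.2, p.1) | p <- rm].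

Definition step (st : state) : state :=
  let: State lam mu ent q q' log := st in
  match q with
  | (x, s) :: qr =>
      let ys := row_ys lam mu s in
      if all (fun y => (ent s y <= x)%O) ys then
        let y0 := lam s + 1 in
        State (fun m => if same_row m s then lam m + 1 else lam m) mu
              (fun a b => if same_box a b s y0 then x else ent a b)
              qr q' log
      else
        let y := nth 0 ys (find (fun y => (x < ent s y)%O) ys) in
        let x' := ent s y in
        State lam mu (fun a b => if same_box a b s y then x else ent a b)
              qr (rcons q' (x', s + 1)) (rcons log (s, x'))
  | [::] => if q' is _ :: _ then State lam mu ent q' [::] log else st
  end.

Definition fullmulti_log (lam mu nu : int -> int) (ent : int -> int -> T)
    (r0 : int) (N : nat) : seq (int * T) :=
  st_log (iter N step (init_state lam mu nu ent r0)).

Definition removed_from_row (log : seq (int * T)) (r : int) : seq T :=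
  [seq e.2 | e <- log & same_row e.1 r].

End Cylindric.

(* Main.v *)
Require Import Defs.
From HB Require Import structures.
From mathcomp Require Import all_boot all_order all_algebra zify.
Import Order.TTheory GRing.Theory Num.Theory.
Local Open Scope ring_scope.

Section Basic.
Variables (n k : nat).
Hypothesis k1 : (1 <= k)%N.
Local Notation K := (k%:Z).
Local Notation w := (n%:Z - k%:Z).

Definition per (f : int -> int) := forall m, f m = f (m + K) + w.

Lemma Kpos : 0 < K. Proof. lia. Qed.
Lemma Kneq0 : K != 0. Proof. lia. Qed.

Lemma per_nat f : per f -> forall (j : nat) m, f (m + j%:Z * K) = f m - j%:Z * w.
Proof.
move=> pf; elim=> [|j IH] m.
  have -> : m + 0%:Z * K = m by lia.
  lia.
have -> : m + (j.+1)%:Z * K = (m + j%:Z * K) + K by lia.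
have := pf (m + j%:Z * K); rewrite IH => h; set X := f (m + j%:Z * K + K) in h *; lia.
Qed.

Lemma per_shift f : per f -> forall m m' (j : int), m' = m + j * K -> f m' = f m - j * w.
Proof.
move=> pf m m' [j|j] ->; first exact: per_nat.
have := @per_nat f pf j.+1 (m + Negz j * K).
have -> : m + Negz j * K + (j.+1)%:Z * K = m by lia.
lia.
Qed.
Arguments per_shift [f] _ [m m' j].

Lemma same_rowE a s : same_row k a s <-> exists j, a = s + j * K.
Proof.
rewrite /same_row; split.
  by move/dvdzP=> [j hj]; exists j; lia.
by move=> [j hj]; apply/dvdzP; exists j; lia.
Qed.

Lemma same_row_refl a : same_row k a a.
Proof. by apply/same_rowE; exists 0; lia. Qed.
Lemma same_row_sym a b : same_row k a b -> same_row k b a.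
Proof. by move/same_rowE=> [j hj]; apply/same_rowE; exists (- j); lia. Qed.
Lemma same_row_trans a b c : same_row k a b -> same_row k b c -> same_row k a c.
Proof.
move/same_rowE=> [j hj] /same_rowE [j' hj']; apply/same_rowE; exists (j + j'); lia.
Qed.
Lemma same_row_add a b (t : int) : same_row k (a + t) (b + t) = same_row k a b.
Proof.
apply/idP/idP => /same_rowE [j hj]; apply/same_rowE; exists j; lia.
Qed.

Lemma same_boxE a b s y0 :
  same_box n k a b s y0 <-> exists j, s = a + j * K /\ y0 = b - j * w.
Proof.
rewrite /same_box; split.
  move/andP=> [/dvdzP [j hj] /eqP e]; exists j.
  move: e; rewrite hj mulzK ?Kneq0 //; lia.
move=> [j [h1 h2]]; apply/andP; split; first by apply/dvdzP; exists j; lia.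
have -> : s - a = j * K by lia.
rewrite mulzK ?Kneq0 //; apply/eqP; lia.
Qed.

Lemma mulK_inj (j j' : int) : j * K = j' * K -> j = j'.
Proof. move=> e; have [h|h|h] := ltgtP j j'; try nia; done. Qed.

Lemma same_box_row m b s y0 j : m = s + j * K -> same_box n k m b s y0 = (b == y0 - j * w).
Proof.
move=> hm; apply/idP/idP.
  move/same_boxE=> [j' [h1 h2]].
  have : (-j) * K = j' * K by lia.
  move/mulK_inj=> e; apply/eqP; lia.
move/eqP=> hb; apply/same_boxE; exists (-j); lia.
Qed.

Lemma same_box_row_false m b s y0 : ~~ same_row k m s -> same_box n k m b s y0 = false.
Proof.
move=> h; apply/negP => /same_boxE [j [h1 h2]]; move/negP: h; apply.
apply/same_rowE; exists (-j); lia.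
Qed.

Lemma same_box_shift a b s y0 :
  same_box n k (a - K) (b + w) s y0 = same_box n k a b s y0.
Proof.
apply/idP/idP => /same_boxE [j [h1 h2]]; apply/same_boxE.
  by exists (j - 1); lia.
by exists (j + 1); lia.
Qed.

Section Skew.
Variables (L M : int -> int).
Hypotheses (pL : per L) (pM : per M).

Lemma skew_shift x y x' y' j : x' = x + j * K -> y' = y - j * w ->
  in_skew L M x' y' = in_skew L M x y.
Proof.
move=> hx hy; rewrite /in_skew /in_shape (per_shift pL hx) (per_shift pM hx) hy.
by rewrite !lerD2r.
Qed.

Variables (d : Order.disp_t) (T : orderType d) (e : int -> int -> T).
Hypothesis pe : forall x y, in_skew L M x y -> e x y = e (x - K) (y + w).

Lemma ent_nat (j : nat) x y : in_skew L M x y -> e x y = e (x - j%:Z * K) (y + j%:Z * w).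
Proof.
elim: j x y => [|j IH] x y h.
  have -> : x - 0%:Z * K = x by lia.
  by have -> : y + 0%:Z * w = y by lia.
rewrite IH // pe; last by rewrite (@skew_shift x y _ _ (- j%:Z)) //; lia.
by congr e; lia.
Qed.

Lemma shiftE x y x' y' j : in_skew L M x y -> x' = x + j * K -> y' = y - j * w ->
  e x' y' = e x y.
Proof.
move=> h hx hy; case: j hx hy => [j|j] hx hy.
  have h' : in_skew L M x' y' by rewrite (@skew_shift x y x' y' _ hx hy).
  rewrite (@ent_nat j x' y' h'); congr e; lia.
rewrite (@ent_nat j.+1 x y h); congr e; lia.
Qed.
End Skew.
End Basic.

Lemma mem_row_ys (L M : int -> int) s y : (y \in row_ys L M s) = (M s < y <= L s).
Proof.
rewrite /row_ys; case: ifP => h.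
  apply/mapP/idP.
    by move=> [j hj ->]; move: hj; rewrite mem_iota; lia.
  move=> hy; exists (absz (y - M s - 1)%R); first by rewrite mem_iota; lia.
  lia.
rewrite in_nil; apply/esym/negP; lia.
Qed.

Lemma size_row_ys (L M : int -> int) s : M s <= L s -> size (row_ys L M s) = `|L s - M s|%N.
Proof. by move=> h; rewrite /row_ys h size_map size_iota. Qed.

Lemma nth_row_ys (L M : int -> int) s i : M s <= L s -> (i < size (row_ys L M s))%N ->
  nth 0 (row_ys L M s) i = M s + (i.+1)%:Z.
Proof.
move=> h; rewrite size_row_ys // => hi.
by rewrite /row_ys h (nth_map 0%N) ?size_iota // nth_iota.
Qed.


Lemma filter_none (A : eqType) (a : pred A) (s : seq A) :
  (forall x, x \in s -> ~~ a x) -> [seq x <- s | a x] = [::].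
Proof.
elim: s => //= x s IH h; rewrite (negbTE (h x (mem_head _ _))) IH //.
by move=> y hy; apply: h; rewrite in_cons hy orbT.
Qed.


Lemma sorted_rcons (A : eqType) (r : rel A) (l : seq A) (a : A) :
  sorted r l -> (forall z, z \in l -> r z a) -> sorted r (rcons l a).
Proof.
case: l => //= h t hs hall; rewrite rcons_path hs /=; apply: hall; exact: mem_last.
Qed.

Section Main.
Variables (n k : nat) (d : Order.disp_t) (T : orderType d)
  (lam0 mu0 nu : int -> int) (ent0 : int -> int -> T) (r0 : int).
Hypothesis k1 : (1 <= k)%N.
Hypothesis tab : is_tableau n k lam0 mu0 ent0.
Hypothesis cnu : cylindric n k nu.
Hypothesis munu : contained mu0 nu.
Local Notation K := (k%:Z).
Local Notation w := (n%:Z - k%:Z).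

Lemma pl0 : per n k lam0. Proof. by case: tab => [[[_ h] _] _ _ _ _]. Qed.
Lemma pm0 : per n k mu0. Proof. by case: tab => [[_ [_ h]] _ _ _ _]. Qed.
Lemma pnu : per n k nu. Proof. by case: cnu. Qed.
Lemma pe0 x y : in_skew lam0 mu0 x y -> ent0 x y = ent0 (x - K) (y + w).
Proof. by case: tab => [_ _ h _ _]; apply: h. Qed.

Lemma psh f : per n k f -> forall m m' j, m' = m + j * K -> f m' = f m - j * w.
Proof. exact: per_shift. Qed.
Arguments psh [f] _ [m m' j].
Lemma srE a s : same_row k a s <-> exists j, a = s + j * K.
Proof. exact: same_rowE. Qed.
Lemma sbE a b s y0 : same_box n k a b s y0 <-> exists j, s = a + j * K /\ y0 = b - j * w.
Proof. exact: same_boxE. Qed.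
Lemma sbrow m b s y0 j : m = s + j * K -> same_box n k m b s y0 = (b == y0 - j * w).
Proof. exact: same_box_row. Qed.
Lemma sbrowF m b s y0 : ~~ same_row k m s -> same_box n k m b s y0 = false.
Proof. exact: same_box_row_false. Qed.
Arguments sbrow [m b s y0 j] _.
Arguments sbrowF [m b s y0] _.
Lemma sbsh a b s y0 : same_box n k (a - K) (b + w) s y0 = same_box n k a b s y0.
Proof. exact: same_box_shift. Qed.
Lemma skE L M : per n k L -> per n k M -> forall x y x' y' j, x' = x + j * K -> y' = y - j * w ->
  in_skew L M x' y' = in_skew L M x y.
Proof. exact: skew_shift. Qed.
Lemma shE L M (e : int -> int -> T) : per n k L -> per n k M ->
  (forall x y, in_skew L M x y -> e x y = e (x - K) (y + w)) ->
  forall x y x' y' j, in_skew L M x y -> x' = x + j * K -> y' = y - j * w -> e x' y' = e x y.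
Proof. move=> pL pM pe x y x' y' j h hx hy; exact: (@shiftE n k k1 L M pL pM d T e pe x y x' y' j h hx hy). Qed.
Arguments shE [L M e] _ _ _ [x y x' y' j] _ _ _.
Arguments skE [L M] _ _ [x y x' y' j] _ _.
Lemma srr a : same_row k a a. Proof. exact: same_row_refl. Qed.
Lemma srs a b : same_row k a b -> same_row k b a. Proof. exact: same_row_sym. Qed.
Lemma srt a b c : same_row k a b -> same_row k b c -> same_row k a c. Proof. exact: same_row_trans. Qed.
Arguments srt [a b c] _ _.
Arguments srs [a b] _.
Lemma sra a b t : same_row k (a + t) (b + t) = same_row k a b. Proof. exact: same_row_add. Qed.

Lemma mono0_nat x y1 (i : nat) : mu0 x < y1 -> y1 + i%:Z <= lam0 x ->
  (ent0 x y1 <= ent0 x (y1 + i%:Z))%O.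
Proof.
case: tab => [_ _ _ hrow _] h1; elim: i => [|i IH] h2; first by rewrite addr0.
apply: (le_trans (IH _)); first lia.
have -> : y1 + (i.+1)%:Z = (y1 + i%:Z) + 1 by lia.
apply: hrow; rewrite /in_skew /in_shape; apply/andP; split; lia.
Qed.

Lemma mono0 x y1 y2 : mu0 x < y1 -> y1 <= y2 -> y2 <= lam0 x ->
  (ent0 x y1 <= ent0 x y2)%O.
Proof.
move=> h1 h2 h3; have -> : y2 = y1 + (absz (y2 - y1)%R)%:Z by lia.
apply: mono0_nat => //; lia.
Qed.

Definition Qs (st : state T) := st_q st ++ st_q' st.

Record inv (st : state T) (c : int -> int) : Prop := Inv {
  i_mu : st_mu st = nu;
  i_per : per n k (st_lam st);
  i_ent : forall x y, in_skew (st_lam st) nu x y ->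
            st_ent st x y = st_ent st (x - K) (y + w);
  i_c : forall s, nu s <= c s <= st_lam st s;
  i_A1 : forall s y p, nu s < y <= c s -> p \in Qs st -> same_row k p.2 s ->
            (st_ent st s y <= p.1)%O;
  i_A2 : forall s y y', nu s < y <= c s -> c (s - 1) < y' <= st_lam st (s - 1) ->
            (st_ent st s y <= ent0 (s - 1) y')%O;
  i_B : forall s y, c s < y <= st_lam st s -> y <= lam0 s /\ st_ent st s y = ent0 s y;
  i_C : forall s e y, e \in st_log st -> same_row k e.1 s -> c s < y <= st_lam st s ->
            (e.2 <= ent0 s y)%O;
  i_D : forall s p y, p \in Qs st -> same_row k p.2 (s + 1) -> c s < y <= st_lam st s ->
            (p.1 <= ent0 s y)%O;
  i_E : forall r, sorted (fun a b => (a <= b)%O) [seq e.2 | e <- st_log st & same_row k e.1 r];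
  i_F : forall r, sorted (fun a b => (a <= b)%O) [seq p.1 | p <- Qs st & same_row k p.2 r]
}.

Definition rm := phase1_removed k lam0 mu0 nu ent0 r0.
Definition FF (h : int) := [seq (ent0 h y, h) | y <- row_ys nu mu0 h & y <= lam0 h].
Definition WW := [seq r0 + i%:Z | i <- iota 0 k].

Lemma rmE : rm = flatten (map FF WW).
Proof. by []. Qed.

Lemma mem_rm p : p \in rm -> exists h y, p = (ent0 h y, h) /\ mu0 h < y <= nu h /\ y <= lam0 h.
Proof.
rewrite rmE => /flattenP [l /mapP [h _ ->]] /mapP [y]; rewrite mem_filter mem_row_ys.
by move=> /andP [h1 h2] ->; exists h, y.
Qed.

Lemma init_le p s y : p \in rm -> same_row k p.2 s -> nu s < y <= lam0 s ->
  (p.1 <= ent0 s y)%O.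
Proof.
move=> /mem_rm [h [y1 [-> [hy1 hy1']]]] /= /srE [j hj] hy.
have hsk : in_skew lam0 mu0 s y.
  rewrite /in_skew /in_shape; move: (munu s) => hm; apply/andP; split; lia.
rewrite -(shE pl0 pm0 pe0 hsk hj (erefl (y - j * w))).
have e1 := psh pnu hj; have e2 := psh pl0 hj.
apply: mono0 => //; lia.
Qed.

Lemma sorted_flat (A : Type) (lr : rel A) (r : int) (g : int -> seq A) (W : seq int) :
  uniq W -> (forall h, ~~ same_row k h r -> g h = [::]) ->
  (forall h1 h2, h1 \in W -> h2 \in W -> same_row k h1 r -> same_row k h2 r -> h1 = h2) ->
  (forall h, sorted lr (g h)) -> sorted lr (flatten (map g W)).
Proof.
move=> + hnil + hs; elim: W => //= h W IH /andP [hnW uW] hu.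
case: (boolP (same_row k h r)) => hr.
  suff -> : flatten (map g W) = [::] by rewrite cats0.
  have : forall h', h' \in W -> g h' = [::].
    move=> h' hh'; apply: hnil; apply/negP => hr'.
    have e : h = h' by apply: hu => //; [exact: mem_head | rewrite in_cons hh' orbT].
    by move: hnW; rewrite e hh'.
  elim: (W) => //= h0 W0 IH0 hall; rewrite hall ?mem_head //= IH0 //.
  by move=> h' hh'; apply: hall; rewrite in_cons hh' orbT.
rewrite hnil //=; apply: IH => // h1 h2 hh1 hh2; by apply: hu; rewrite in_cons ?hh1 ?hh2 orbT.
Qed.

Lemma init_sorted r : sorted (fun a b => (a <= b)%O) [seq p.1 | p <- rm & same_row k p.2 r].
Proof.
pose g h := [seq p.1 | p <- FF h & same_row k p.2 r].
have -> : [seq p.1 | p <- rm & same_row k p.2 r] = flatten (map g WW).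
  rewrite rmE /g; elim: WW => //= h W IH; by rewrite filter_cat map_cat IH.
apply: (@sorted_flat _ _ r).
- rewrite /WW map_inj_uniq ?iota_uniq // => i j e; apply/eqP; rewrite -eqz_nat; apply/eqP; lia.
- move=> h hr; rewrite /g /FF filter_map filter_none //.
- move=> h1 h2 /mapP [i1 hi1 ->] /mapP [i2 hi2 ->] /srE [a ha] /srE [b hb].
  move: hi1 hi2; rewrite !mem_iota => hi1 hi2.
  have e : i1%:Z - i2%:Z = (a - b) * K by lia.
  have [h|h|h] := ltgtP (a - b) 0.
  + have : (a - b) * K <= - K by nia.
    lia.
  + have : (a - b) * K >= K by nia.
    lia.
  + lia.
move=> h; rewrite /g /FF filter_map.
case: (boolP (same_row k h r)) => hr; last by rewrite filter_none.
set l := [seq y <- row_ys nu mu0 h | y <= lam0 h].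
have -> : [seq y <- l | preim (fun y => (ent0 h y, h)) (fun p => same_row k p.2 r) y] = l.
  by apply/all_filterP/allP => y _.
rewrite -map_comp sorted_map.
apply: (@sub_in_sorted _ (fun y => mu0 h < y <= lam0 h) (fun a b : int => a <= b)).
- move=> y1 y2 hy1 hy2 /= h12; move: hy1 hy2; rewrite !unfold_in /= => hy1 hy2; apply: mono0; lia.
- by apply/allP => y; rewrite mem_filter mem_row_ys; lia.
apply: sorted_filter; first exact: le_trans.
rewrite /row_ys; case: ifP => // _.
apply: (homo_sorted (e := leq)); last exact: iota_sorted.
move=> a b /= hab; lia.
Qed.

Lemma init_inv : inv (init_state k lam0 mu0 nu ent0 r0) nu.
Proof.
rewrite /init_state -/rm.
constructor => /=.
- by [].
- move=> m; have := pl0 m; have := pnu m; lia.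
- move=> x y h; apply: pe0; move: h; rewrite /in_skew /in_shape; have := munu x.
  move=> hm /andP [h1 h2]; apply/andP; split; lia.
- move=> s; lia.
- move=> s y p h; lia.
- move=> s y y' h; lia.
- move=> s y h; split=> //; lia.
- move=> s e y /mapP [p hp ->] /= hs hy; apply: init_le => //; lia.
- move=> s p y; rewrite /Qs /= cats0 => /mapP [p0 hp0 ->] /= hs hy.
  apply: init_le => //; first by rewrite -(sra _ _ 1).
  lia.
- by move=> r; rewrite filter_map -map_comp; apply: init_sorted.
- move=> r; rewrite /Qs /= cats0 filter_map -map_comp.
  have -> : [seq p <- rm | preim (fun p : T * int => (p.1, p.2 + 1)) (fun p => same_row k p.2 r) p]
      = [seq p <- rm | same_row k p.2 (r - 1)].
    by apply: eq_filter => p /=; rewrite -[RHS](sra _ _ 1) subrK.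
  exact: init_sorted.
Qed.

Lemma inv_sameQ (st st' : state T) c : st_lam st' = st_lam st -> st_mu st' = st_mu st ->
  st_ent st' = st_ent st -> st_log st' = st_log st -> Qs st' = Qs st -> inv st c -> inv st' c.
Proof.
move=> e1 e2 e3 e4 e5 [h1 h2 h3 h4 h5 h6 h7 h8 h9 h10 h11].
by constructor; rewrite ?e1 ?e2 ?e3 ?e4 ?e5.
Qed.

Lemma sorted_cons_le (a z : T) l : sorted (fun a b => (a <= b)%O) (a :: l) -> z \in l -> (a <= z)%O.
Proof. by rewrite /= path_sortedE; [move=> /andP [/allP h _]; apply: h | exact: le_trans]. Qed.

Lemma divq m s j : m = s + j * K -> ((s - m) %/ K)%Z = - j.
Proof.
move=> hm; have -> : s - m = (- j) * K by lia.
by rewrite mulzK //; lia.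
Qed.
Arguments divq [m s j] _.

Lemma sr_addK m s : same_row k (m + K) s = same_row k m s.
Proof. by apply/idP/idP => /srE [j hj]; apply/srE; [exists (j - 1) | exists (j + 1)]; lia. Qed.

Lemma step_inv (st : state T) c : inv st c -> exists c', inv (step n k st) c'.
Proof.
case: st => L M E q q' log I.
have hM : M = nu by case: I.
subst M.
case: q I => [|[x s] qr] I.
  case: q' I => [|h t] I; first by exists c.
  exists c; apply: (@inv_sameQ _ _ c _ _ _ _ _ I) => //.
  by rewrite /Qs /= cats0.
case: I => /= _ pL pE hc hA1 hA2 hB hC hD hE hF.
have hxQ : (x, s) \in Qs (State L nu E ((x, s) :: qr) q' log) by rewrite /Qs mem_head.
have hQold : forall p, p \in qr ++ q' -> p \in Qs (State L nu E ((x, s) :: qr) q' log).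
  by move=> p hp; rewrite /Qs /= in_cons hp orbT.
have hsort : forall p, p \in qr ++ q' -> same_row k p.2 s -> (x <= p.1)%O.
  move=> p hp hps; have := hF s; rewrite /Qs /= srr /=.
  move/sorted_cons_le; apply; apply/mapP; exists p => //; by rewrite mem_filter hps.
have hnuL : nu s <= L s by have := hc s; lia.
rewrite /step /=.
case: ifP => hall.
  exists (fun m => if same_row k m s then L m + 1 else c m).
  have sbL : forall m y, same_row k m s -> same_box n k m y s (L s + 1) = (y == L m + 1).
    move=> m y /srE [j hj]; rewrite (sbrow hj) (psh pL hj); apply/eqP/eqP; lia.
  have allx : forall m y, same_row k m s -> nu m < y <= L m -> (E m y <= x)%O.
    move=> m y /srE [j hj] hy.
    have e1 := psh pL hj; have e2 := psh pnu hj.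
    have hsk : in_skew L nu s (y + j * w).
      rewrite /in_skew /in_shape; apply/andP; split; lia.
    have ey : y = y + j * w - j * w by lia.
    rewrite (shE pL pnu pE hsk hj ey).
    by move/allP: hall; apply; rewrite mem_row_ys; lia.
  have Ele : forall m y, same_row k m s -> nu m < y <= L m + 1 ->
      ((if same_box n k m y s (L s + 1) then x else E m y) <= x)%O.
    move=> m y hm hy; rewrite sbL //; case: eqP => [_|hne]; first exact: lexx.
    apply: allx => //; lia.
  have shr : forall r y, (if same_row k r s then L r + 1 else c r) < y <=
      (if same_row k r s then L r + 1 else L r) -> c r < y <= L r /\ ~~ same_row k r s.
    move=> r y; case: ifP => hr; first lia.
    by move=> h; split => //; rewrite hr.
  constructor => /=.
  - by [].
  - move=> m; rewrite sr_addK; have := pL m; case: ifP => _; lia.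
  - move=> x0 y0 hsk; rewrite sbsh; case: ifP => hb //; apply: pE.
    move: hsk; rewrite /in_skew /in_shape; case: (boolP (same_row k x0 s)) => hr //.
    rewrite sbL // in hb; move/negbT/eqP: hb => hb.
    move=> /andP [h1 h2]; apply/andP; split; lia.
  - move=> m; have := hc m; case: ifP => _; lia.
  - move=> m y p; case: (boolP (same_row k m s)) => hm hy hp hsp; rewrite /Qs /= in hp.
      exact: (le_trans (Ele m y hm hy) (hsort p hp (srt hsp hm))).
    rewrite sbrowF //; apply: hA1 => //; exact: hQold.
  - move=> m y y'; case: (boolP (same_row k m s)) => hm hy /shr [hy' _].
      apply: (le_trans (Ele m y hm hy)); apply: (hD _ _ _ hxQ _ hy') => /=.
      by rewrite subrK; apply: srs.
    rewrite sbrowF //; exact: hA2.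
  - move=> m y /shr [hy hr]; rewrite sbrowF //; exact: hB.
  - move=> m e y he hse /shr [hy hr]; exact: hC.
  - move=> m p y hp hsp /shr [hy hr]; apply: hD hy => //; apply: hQold; exact: hp.
  - exact: hE.
  - move=> r; have := hF r; rewrite /Qs /=; case: ifP => _ //= /path_sorted //.
move/negbT/allPn: hall => [y0 hy0 hn0].
set ys := row_ys L nu s.
have hhas : has (fun y => (x < E s y)%O) ys by apply/hasP; exists y0 => //; rewrite ltNge.
set i := find (fun y => (x < E s y)%O) ys.
have hi : (i < size ys)%N by rewrite -has_find.
have hsz : size ys = absz (L s - nu s)%R by rewrite /ys size_row_ys.
set yb := nth 0 ys i.
have hybE : yb = nu s + (i.+1)%:Z by rewrite /yb /ys nth_row_ys.
have hyb : nu s < yb <= L s by rewrite -mem_row_ys mem_nth.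
have hPyb : (x < E s yb)%O by exact: (nth_find 0 hhas).
have hbef : forall y, nu s < y < yb -> (E s y <= x)%O.
  move=> y hy; have hi' : (absz (y - nu s - 1)%R < i)%N by lia.
  have := before_find 0 hi'; rewrite /ys nth_row_ys //; last by rewrite -/ys hsz; lia.
  have -> : nu s + (absz (y - nu s - 1)%R).+1%:Z = y by lia.
  by move/negbT; rewrite -leNgt.
have hskyb : in_skew L nu s yb by rewrite /in_skew /in_shape; apply/andP; split; lia.
have rowf : forall m j, m = s + j * K -> [/\ nu m < yb - j * w <= L m,
    E m (yb - j * w) = E s yb, c m < yb - j * w,
    (yb - j * w <= lam0 m /\ E m (yb - j * w) = ent0 m (yb - j * w)) &
    (forall y, nu m < y < yb - j * w -> (E m y <= x)%O)].
  move=> m j hj; have e1 := psh pL hj; have e2 := psh pnu hj.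
  have ha : nu m < yb - j * w <= L m by lia.
  have hb : E m (yb - j * w) = E s yb by apply: (shE pL pnu pE hskyb hj).
  have hc' : c m < yb - j * w.
    rewrite ltNge; apply/negP => hle.
    have hm : same_row k s m by apply/srE; exists (- j); lia.
    have : (E m (yb - j * w) <= x)%O.
      by apply: (hA1 m (yb - j * w) (x, s)) => //; lia.
    by rewrite hb leNgt hPyb.
  split => //.
    apply: hB; lia.
  move=> y hy.
  have hsk : in_skew L nu s (y + j * w) by rewrite /in_skew /in_shape; apply/andP; split; lia.
  have ey : y = y + j * w - j * w by lia.
  rewrite (shE pL pnu pE hsk hj ey); apply: hbef; lia.
have hs0 : s = s + 0 * K by lia.
have [_ _ hcyb [hyl hyent] _] := rowf s 0 hs0.
have cys : c s < yb by lia.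
have Bys : E s yb = ent0 s yb by move: hyent; have -> : yb - 0 * w = yb by lia.
have memQ : forall p, p \in qr ++ rcons q' (E s yb, s + 1) -> p \in qr ++ q' \/ p = (E s yb, s + 1).
  move=> p; rewrite -cats1 catA mem_cat mem_seq1 => /orP [h|/eqP h]; [left|right] => //.
pose c' := fun m => if same_row k m s then yb + ((s - m) %/ K)%Z * w else c m.
have shr : forall r y, c' r < y <= L r -> c r < y <= L r.
  move=> r y; rewrite /c'; case: (boolP (same_row k r s)) => hr //.
  move/srE: hr => [j hj]; rewrite (divq hj); have [_ _ h3 _ _] := rowf r j hj; lia.
have Ele : forall m j y, m = s + j * K -> nu m < y <= yb - j * w ->
    ((if same_box n k m y s yb then x else E m y) <= x)%O.
  move=> m j y hj hy; rewrite (sbrow hj); case: eqP => [_|hne]; first exact: lexx.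
  have [_ _ _ _ h5] := rowf m j hj; apply: h5; lia.
have newle : forall m y, same_row k m s -> c' m < y <= L m -> (E s yb <= ent0 m y)%O.
  move=> m y hm; rewrite /c' hm; move/srE: hm => [j hj]; rewrite (divq hj) => hy.
  have [h1 h2 h3 [h4 h5] _] := rowf m j hj.
  have [h6 _] : y <= lam0 m /\ E m y = ent0 m y by apply: hB; lia.
  rewrite -h2 h5; apply: mono0; have := munu m; lia.
exists c'; constructor => /=.
- by [].
- exact: pL.
- by move=> x0 y1 hsk; rewrite sbsh; case: ifP => // _; apply: pE.
- move=> m; rewrite /c'; case: (boolP (same_row k m s)) => hm; last exact: hc m.
  move/srE: hm => [j hj]; rewrite (divq hj); have [h1 _ _ _ _] := rowf m j hj; lia.
- move=> m y p; rewrite /c'; case: (boolP (same_row k m s)) => hm hy hp hsp.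
    move/srE: (hm) => [j hj]; rewrite (divq hj) in hy.
    have xp : (x <= p.1)%O.
      case: (memQ p hp) => [hp'|->]; [exact: hsort p hp' (srt hsp hm) | exact: ltW].
    apply: le_trans xp; apply: (Ele m j) => //; lia.
  rewrite sbrowF //; case: (memQ p hp) => [hp'|hpe].
    by apply: hA1 hy _ hsp; apply: hQold.
  move: hsp; rewrite hpe /= => /srE [j hj].
  have hj' : m - 1 = s + (- j) * K by lia.
  have [h1 h2 h3 [h4 h5] _] := rowf (m - 1) (- j) hj'.
  rewrite -h2 h5; apply: hA2 => //; lia.
- move=> m y y'; rewrite /c'; case: (boolP (same_row k m s)) => hm hy hy'.
    have hy'' := shr _ _ hy'.
    move/srE: (hm) => [j hj]; rewrite (divq hj) in hy.
    apply: (le_trans (Ele m j y hj _)); first lia.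
    apply: (hD _ _ _ hxQ _ hy'') => /=.
    by rewrite subrK; apply: srs.
  rewrite sbrowF //; apply: hA2 => //; exact: shr.
- move=> m y hy; have hy' := shr _ _ hy; move: hy; rewrite /c'.
  case: (boolP (same_row k m s)) => hm hy; last by rewrite sbrowF //; exact: hB.
  move/srE: (hm) => [j hj]; rewrite (divq hj) in hy.
  rewrite (sbrow hj).
  have -> : (y == yb - j * w) = false by apply/eqP; lia.
  exact: hB.
- move=> m e y; rewrite mem_rcons in_cons => /orP [/eqP -> | he] hse hy.
    by apply: newle => //; apply: srs.
  exact: hC (shr _ _ hy).
- move=> m p y hp hsp hy; case: (memQ p hp) => [hp'|hpe].
    by apply: hD (shr _ _ hy) => //; apply: hQold.
  move: hsp; rewrite hpe /= sra => hsm.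
  by apply: newle => //; apply: srs.
- move=> r; rewrite filter_rcons /=; case: ifP => hr; last exact: hE r.
  rewrite map_rcons; apply: sorted_rcons (hE r) _ => z /mapP [e].
  rewrite mem_filter => /andP [hse he] ->.
  move/srs/srE: hr => [j hj].
  have [h1 h2 h3 [h4 h5] _] := rowf r j hj.
  rewrite -h2 h5; apply: hC he hse _; lia.
- move=> r; rewrite /Qs /= -rcons_cat filter_rcons /=.
  have hs0' : sorted (fun a b => (a <= b)%O) [seq p.1 | p <- qr ++ q' & same_row k p.2 r].
    by have := hF r; rewrite /Qs /=; case: ifP => _ //= /path_sorted.
  case: ifP => hr; last exact: hs0'.
  rewrite map_rcons; apply: sorted_rcons hs0' _ => z /mapP [p].
  rewrite mem_filter => /andP [hpr hp] ->.
  rewrite Bys; apply: (hD s p yb (hQold p hp)) => //; last lia.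
  exact: srt hpr (srs hr).
Qed.

Lemma iter_inv N : exists c, inv (iter N (@step n k d T) (init_state k lam0 mu0 nu ent0 r0)) c.
Proof.
elim: N => [|N [c I]]; first by exists nu; exact: init_inv.
rewrite iterS; exact: step_inv I.
Qed.

Lemma final N r : sorted (fun a b : T => (a <= b)%O)
      (removed_from_row k (fullmulti_log n k lam0 mu0 nu ent0 r0 N) r).
Proof.
have [c [_ _ _ _ _ _ _ _ _ hE _]] := iter_inv N.
exact: hE.
Qed.
End Main.

Theorem mainTheorem13 (n k : nat) (d : Order.disp_t) (T : orderType d)
    (lam mu nu : int -> int) (ent : int -> int -> T) (r0 : int) :
  (1 <= k)%N -> (k < n)%N ->
  is_tableau n k lam mu ent ->
  cylindric n k nu -> contained mu nu ->
  (forall x x' y : int, in_skew nu mu x y -> in_skew nu mu x' y -> x = x') ->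
  forall (N : nat) (r : int),
    sorted (fun a b : T => (a <= b)%O)
      (removed_from_row k (fullmulti_log n k lam mu nu ent r0 N) r).
Proof.
move=> k1 _ tab cnu munu _ N r.
exact: (@final n k d T lam mu nu ent r0 k1 tab cnu munu N r).
Qed.
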